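(* For every integer $n\ge 3$, the prism graph $GP(n,1)$ is odd prime.
   Context: All graphs are finite and simple. A graph $G$ of order $N$ is odd prime if there is a bijection $\ell:V(G)\to\{1,3,\ldots,2N-1\}$ with $\gcd(\ell(u),\ell(v))=1$ for every edge $uv$. The prism graph $GP(n,1)$ has vertices $u_1,\ldots,u_n,v_1,\ldots,v_n$ and edges $u_iu_{i+1}$, $v_iv_{i+1}$ for $1\le i\le n-1$, $u_nu_1$, $v_nv_1$, and $u_iv_i$ for $1\le i\le n$. *)

(* Defs.v *)
From mathcomp Require Import all_boot.
Set Implicit Arguments. Unset Strict Implicit. Unset Printing Implicit Defensive.

Definition simple_graph (T : finType) (adj : rel T) : Prop :=
  symmetric adj /\ irreflexive adj.

Definition odd_labels (N : nat) : seq nat := [seq 2 * i + 1 | i <- iota 0 N].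

(* G of order N = #|T| is odd prime: there is a bijection l : V -> {1,3,..,2N-1}
   (an injective map into that N-element set) with gcd(l u, l v) = 1 on every edge. *)
Definition odd_prime (T : finType) (adj : rel T) : Prop :=
  exists l : T -> nat,
    [/\ injective l,
        forall x, l x \in odd_labels #|T|
      & forall x y, adj x y -> coprime (l x) (l y)].

(* Prism graph GP(n,1): vertices (false, i) = u_(i+1), (true, i) = v_(i+1), i < n.
   Edges: same side with indices differing by 1 mod n (cycles), or same index on
   different sides (spokes). *)
Definition prism_adj (n : nat) : rel (bool * 'I_n) :=
  fun x y =>
    ((x.1 == y.1) &&
      (((x.2 : nat) == (y.2.+1 %% n)) || ((y.2 : nat) == (x.2.+1 %% n))) &&
      (x.2 != y.2))
    || ((x.1 != y.1) && (x.2 == y.2)).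
Arguments prism_adj n : clear implicits.

(* Main.v *)
Require Import Defs.
From mathcomp Require Import all_boot zify.

Lemma cop a b : odd a -> [|| b == a + 2, b == a + 4 | a == 1] -> coprime a b.
Proof.
move=> oa /or3P [/eqP->|/eqP->|/eqP->].
- by rewrite /coprime gcdnDl -/(coprime a 2) coprimen2.
- by rewrite /coprime gcdnDl -/(coprime a 4) (_ : 4 = 2 ^ 2) // coprime_pexpr // coprimen2.
- exact: coprime1n.
Qed.

Definition lab n (x : bool * 'I_n) : nat :=
  4 * x.2 + 1 + 2 * (x.1 != (((x.2 : nat) == 0) && (3 %| 4 * n - 1))).

Arguments lab {n}.
Lemma lab_odd n (x : bool * 'I_n) : odd (lab x).
Proof. rewrite /lab !oddD /=; by case: (odd _); case: (odd _). Qed.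

Theorem theorem3p5 (n : nat) : 3 <= n -> odd_prime (prism_adj n).
Proof.
move=> n3; exists (@lab n); split.
- move=> [b1 i] [b2 j]; rewrite /lab /= => E.
  have Eij : (i : nat) = j.
    by move: E; case: (b1 != _); case: (b2 != _) => /=; lia.
  have Eij' : i = j by apply: val_inj.
  subst j; congr pair.
  by move: E; case: b1; case: b2; case: (_ && _) => /=; lia.
- move=> [b i]; rewrite card_prod card_bool card_ord /odd_labels.
  apply/mapP; exists (2 * i + (b != (((i : nat) == 0) && (3 %| 4 * n - 1)))).
    by rewrite mem_iota; have := ltn_ord i; case: (_ != _) => /=; lia.
  by rewrite /lab /=; case: (_ != _) => /=; lia.
- have key : forall (b : bool) (i j : 'I_n), (j : nat) = (i.+1 %% n) ->
      coprime (lab (b, i)) (lab (b, j)).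
    move=> b i j Ej.
    have Hi := ltn_ord i.
    case: (ltnP i.+1 n) => Hin.
    + rewrite modn_small // in Ej.
      apply: cop; first exact: lab_odd.
      rewrite /lab /= Ej.
      by case: b; case: (3 %| _); lia.
    + have Ei : (i : nat) = n.-1 by lia.
      have E0 : (j : nat) = 0 by rewrite Ej (_ : i.+1 = n) ?modnn //; lia.
      rewrite coprime_sym.
      rewrite /lab /= E0 Ei /=.
      case Hs: (3 %| 4 * n - 1); case: b => /=.
      * by rewrite muln0 !addn0 coprime1n.
      * rewrite muln1 prime_coprime //; lia.
      * rewrite muln1 prime_coprime //; lia.
      * by rewrite muln0 !addn0 coprime1n.
  move=> [b1 i] [b2 j]; rewrite /prism_adj /= => /orP [].
  + case/andP => /andP [/eqP <- /orP [] /eqP E] _.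
    * by rewrite coprime_sym; apply: key.
    * by apply: key.
  + case/andP => Hb /eqP Eij; subst j.
    have H2 : forall a b, odd a -> odd b -> (b == a + 2) || (a == b + 2) -> coprime a b.
      move=> a c oa oc /orP [] E.
      - by apply: cop => //; rewrite E.
      - by rewrite coprime_sym; apply: cop => //; rewrite E.
    apply: H2; try exact: lab_odd.
    by rewrite /lab /=; case: b1 b2 Hb => [] [] //= _; case: (_ && _) => /=; lia.
Qed.
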